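(* Let $p\in\mathbb{R}$. Every $z=(v,m,\sigma,e)\in Z$ satisfying $m\ne(e+p)v$, $2e-|v|^2>0$ and $M(z)=0$ belongs to $K^{\Lambda,1}$.
   Context: $\mathcal S_0^{2\times2}$ is the space of traceless symmetric $2\times2$ matrices, $Z:=\mathbb{R}^2\times\mathbb{R}^2\times\mathcal S_0^{2\times2}\times\mathbb{R}$, $K:=\{z\in Z: v\otimes v-\sigma=e\,\mathrm{Id},\ m=(e+p)v\}$. The wave cone is $\Lambda=\{\bar z=(\bar v,\bar m,\bar\sigma,\bar e)\in Z:\ (\bar v,\bar e)\neq0\text{ and there is }0\ne(\xi,c)\in\mathbb{R}^2\times\mathbb{R}\text{ with }(\bar\sigma+\bar e\,\mathrm{Id})\xi+c\bar v=0,\ \bar v\cdot\xi=0,\ \bar m\cdot\xi+c\bar e=0\}$. For a set $A\subset Z$, $A^{\Lambda,1}:=A\cup\{sz_1+(1-s)z_2: z_1,z_2\in A,\ s\in[0,1],\ z_1-z_2\in\Lambda\}$, and $K^{\Lambda,1}$ is this for $A=K$. For $z$ with $m\ne(e+p)v$ set $\eta(z):=\frac{m-(e+p)v}{|m-(e+p)v|}$ and $M(z):=v\otimes v-\sigma-e\,\mathrm{Id}+(2e-|v|^2)\eta(z)\otimes\eta(z)$. *)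

(* Defs.v *)
(* Reals: an arbitrary real closed field R (contains the
   case R = the real numbers; only field operations, order and sqrt are used). *)
From mathcomp Require Import all_boot all_order all_algebra.
Set Implicit Arguments. Unset Strict Implicit. Unset Printing Implicit Defensive.
Import Order.TTheory GRing.Theory Num.Theory.
Local Open Scope ring_scope.

Section Defs.
Variable R : rcfType.

Record Zt := mkZ { zv : 'cV[R]_2; zm : 'cV[R]_2; zsigma : 'M[R]_2; ze : R }.

Definition inZ (z : Zt) : Prop := (zsigma z)^T = zsigma z /\ \tr (zsigma z) = 0.

Definition dot (a b : 'cV[R]_2) : R := \sum_(i < 2) a i 0 * b i 0.
Definition vnorm (a : 'cV[R]_2) : R := Num.sqrt (dot a a).
Definition tens (a b : 'cV[R]_2) : 'M[R]_2 := a *m b^T.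

Definition zadd (z1 z2 : Zt) : Zt :=
  mkZ (zv z1 + zv z2) (zm z1 + zm z2) (zsigma z1 + zsigma z2) (ze z1 + ze z2).
Definition zscale (s : R) (z : Zt) : Zt :=
  mkZ (s *: zv z) (s *: zm z) (s *: zsigma z) (s * ze z).
Definition zsub (z1 z2 : Zt) : Zt := zadd z1 (zscale (-1) z2).

Definition Kset (p : R) (z : Zt) : Prop :=
  inZ z /\ tens (zv z) (zv z) - zsigma z = (ze z)%:M
        /\ zm z = (ze z + p) *: zv z.

Definition wave_cone (zb : Zt) : Prop :=
  inZ zb /\ (zv zb != 0 \/ ze zb != 0) /\
  exists (xi : 'cV[R]_2) (c : R), (xi != 0 \/ c != 0) /\
    (zsigma zb + (ze zb)%:M) *m xi + c *: zv zb = 0 /\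
    dot (zv zb) xi = 0 /\
    dot (zm zb) xi + c * ze zb = 0.

Definition K_lam1 (p : R) (z : Zt) : Prop :=
  Kset p z \/
  exists (z1 z2 : Zt) (s : R), Kset p z1 /\ Kset p z2 /\ 0 <= s <= 1 /\
    wave_cone (zsub z1 z2) /\ z = zadd (zscale s z1) (zscale (1 - s) z2).

Definition wdef (p : R) (z : Zt) : 'cV[R]_2 := zm z - (ze z + p) *: zv z.
Definition eta (p : R) (z : Zt) : 'cV[R]_2 := (vnorm (wdef p z))^-1 *: wdef p z.
Definition Mz (p : R) (z : Zt) : 'M[R]_2 :=
  tens (zv z) (zv z) - zsigma z - (ze z)%:M
  + (2 * ze z - vnorm (zv z) ^+ 2) *: tens (eta p z) (eta p z).

End Defs.

(* Main.v *)
Require Import Defs.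
From mathcomp Require Import all_boot all_order all_algebra.
From mathcomp Require Import ring lra.
Import Order.TTheory GRing.Theory Num.Theory.
Local Open Scope ring_scope.


Section H.
Context {R : rcfType}.
Definition i0 : 'I_2 := ord0.
Definition i1 : 'I_2 := ord_max.

Lemma ord2E (i : 'I_2) : i = i0 \/ i = i1.
Proof. case: i => [[|[|k]]] Hi; [left|right|by []]; exact: val_inj. Qed.

Lemma ord1E (i : 'I_1) : i = ord0.
Proof. case: i => [[|k]] Hi //; exact: val_inj. Qed.

Lemma sum2 (F : 'I_2 -> R) : \sum_(i < 2) F i = F i0 + F i1.
Proof. rewrite big_ord_recr big_ord1 /=; congr (F _ + _); exact: val_inj. Qed.

Lemma dotE (a b : 'cV[R]_2) : dot a b = a i0 ord0 * b i0 ord0 + a i1 ord0 * b i1 ord0.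
Proof. by rewrite /dot sum2. Qed.

Lemma tensE (a b : 'cV[R]_2) i j : tens a b i j = a i ord0 * b j ord0.
Proof. by rewrite /tens mxE big_ord1 mxE. Qed.

Lemma trE (A : 'M[R]_2) : \tr A = A i0 i0 + A i1 i1.
Proof. by rewrite /mxtrace sum2. Qed.

Lemma e00 : (i0 == i0) = true. Proof. by []. Qed.
Lemma e11 : (i1 == i1) = true. Proof. by []. Qed.
Lemma e01 : (i0 == i1) = false. Proof. by []. Qed.
Lemma e10 : (i1 == i0) = false. Proof. by []. Qed.

Lemma cV2P (a b : 'cV[R]_2) : a i0 ord0 = b i0 ord0 -> a i1 ord0 = b i1 ord0 -> a = b.
Proof.
move=> h0 h1; apply/matrixP => i j; rewrite (ord1E j).
by case: (ord2E i) => ->.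
Qed.

Lemma M2P (a b : 'M[R]_2) : a i0 i0 = b i0 i0 -> a i0 i1 = b i0 i1 ->
  a i1 i0 = b i1 i0 -> a i1 i1 = b i1 i1 -> a = b.
Proof.
move=> h0 h1 h2 h3; apply/matrixP => i j.
by case: (ord2E i) => ->; case: (ord2E j) => ->.
Qed.

Lemma subeq {x y D : R} : D = 0 -> x - y = D -> x = y.
Proof. by move=> -> /eqP; rewrite subr_eq0 => /eqP. Qed.
Lemma subeqH {x y a b : R} : a = b -> x - y = a - b -> x = y.
Proof. by move=> ->; rewrite subrr; apply: subeq. Qed.
Lemma subeqK {x y a b : R} (k : R) : a = b -> x - y = k * (a - b) -> x = y.
Proof. by move=> ->; rewrite subrr mulr0; apply: subeq. Qed.

Lemma cV_neq0 (a : 'cV[R]_2) : a != 0 -> a i0 ord0 != 0 \/ a i1 ord0 != 0.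
Proof.
move=> h; case: (eqVneq (a i0 ord0) 0) => h0; last by left.
case: (eqVneq (a i1 ord0) 0) => h1; last by right.
by move: h; rewrite (@cV2P a 0) ?eqxx // mxE.
Qed.

Lemma dot_gt0 (a : 'cV[R]_2) : a != 0 -> 0 < dot a a.
Proof.
move=> /cV_neq0 h; rewrite dotE.
case: h => h.
  have: 0 < a i0 ord0 * a i0 ord0 by rewrite -expr2 exprn_even_gt0.
  by move=> H; apply: (lt_le_trans H); rewrite lerDl -expr2 sqr_ge0.
have: 0 < a i1 ord0 * a i1 ord0 by rewrite -expr2 exprn_even_gt0.
by move=> H; apply: (lt_le_trans H); rewrite lerDr -expr2 sqr_ge0.
Qed.

Lemma dot_ge0 (a : 'cV[R]_2) : 0 <= dot a a.
Proof. by rewrite dotE addr_ge0 // -expr2 sqr_ge0. Qed.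

Lemma vnorm2 (a : 'cV[R]_2) : vnorm a ^+ 2 = dot a a.
Proof. by rewrite /vnorm sqr_sqrtr // dot_ge0. Qed.

Ltac crunch := rewrite ?dotE ?trE; rewrite ?(tensE, mxE, big_ord1, e00, e11, e01, e10, mulr1n, mulr0n) /=.

Lemma Kset_mk p (u : 'cV[R]_2) (E : R) : dot u u = 2 * E ->
  Kset p (mkZ u ((E + p) *: u) (tens u u - E%:M) E).
Proof.
move=> h; split; last split => //=.
  split => /=.
    apply/M2P; crunch; ring.
  move: h; crunch => h; apply: (subeqH h); ring.
by rewrite opprB addrC subrK.
Qed.


Lemma subeq2 {x y a1 b1 a2 b2 : R} (k1 k2 : R) : a1 = b1 -> a2 = b2 ->
  x - y = k1 * (a1 - b1) + k2 * (a2 - b2) -> x = y.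
Proof. by move=> -> ->; rewrite !subrr !mulr0 addr0; apply: subeq. Qed.

Lemma wave_mk p (v n : 'cV[R]_2) (t1 t2 E1 E2 : R) : t1 != t2 -> n != 0 ->
  dot (v + t1 *: n) (v + t1 *: n) = 2 * E1 ->
  dot (v + t2 *: n) (v + t2 *: n) = 2 * E2 ->
  wave_cone (zsub
    (mkZ (v + t1 *: n) ((E1 + p) *: (v + t1 *: n)) (tens (v + t1 *: n) (v + t1 *: n) - E1%:M) E1)
    (mkZ (v + t2 *: n) ((E2 + p) *: (v + t2 *: n)) (tens (v + t2 *: n) (v + t2 *: n) - E2%:M) E2)).
Proof.
move=> ht hn h1 h2.
move: h1 h2; crunch => h1 h2.
have ht' : t1 - t2 != 0 by rewrite subr_eq0.
rewrite /zsub /zadd /zscale /=.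
split.
  split => /=.
    apply/M2P; crunch; ring.
  crunch; apply: (subeq2 1 (-1) h1 h2); ring.
split.
  left; apply/negP => /eqP /= H.
  have H0 := congr1 (fun a : 'cV[R]_2 => a i0 ord0) H; have H1 := congr1 (fun a : 'cV[R]_2 => a i1 ord0) H.
  move: H0 H1; crunch => H0 H1.
  have E0 : (t1 - t2) * n i0 ord0 = 0 by rewrite -H0; ring.
  have E1' : (t1 - t2) * n i1 ord0 = 0 by rewrite -H1; ring.
  move: E0 E1' => /eqP; rewrite mulf_eq0 (negbTE ht') /= => /eqP E0 /eqP; rewrite mulf_eq0 (negbTE ht') /= => /eqP E1'.
  by case: (@cV_neq0 n hn); rewrite ?E0 ?E1' eqxx.
exists (\col_k (if k == i0 then - n i1 ord0 else n i0 ord0)).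
exists (v i0 ord0 * n i1 ord0 - v i1 ord0 * n i0 ord0).
split.
  left; apply/negP => /eqP /= H.
  have H0 := congr1 (fun a : 'cV[R]_2 => a i0 ord0) H; have H1 := congr1 (fun a : 'cV[R]_2 => a i1 ord0) H.
  move: H0 H1; crunch => H0 H1.
  case: (@cV_neq0 n hn); first by rewrite H1 eqxx.
  by rewrite -oppr_eq0 H0 eqxx.
split.
  apply/cV2P; crunch; rewrite ?sum2; crunch; ring.
split; crunch; ring.
Qed.

Lemma lin4 {x y a1 b1 a2 b2 a3 b3 a4 b4 : R} (k1 k2 k3 k4 : R) :
  a1 = b1 -> a2 = b2 -> a3 = b3 -> a4 = b4 ->
  x - y = k1 * (a1 - b1) + k2 * (a2 - b2) + k3 * (a3 - b3) + k4 * (a4 - b4) -> x = y.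
Proof. by move=> -> -> -> ->; rewrite !subrr !mulr0 !addr0; apply: subeq. Qed.

Lemma keys (t1 t2 a d W s : R) : t1 != t2 -> d = -(t1*t2) ->
  W = d * (t1 + t2 + 2 * a) / 2 -> s = - t2 / (t1 - t2) ->
  [/\ s * t1 + (1 - s) * t2 = 0,
      s * t1 ^+ 2 + (1 - s) * t2 ^+ 2 = d,
      s * ((t1 ^+ 2 + 2 * a * t1 - d) / 2) + (1 - s) * ((t2 ^+ 2 + 2 * a * t2 - d) / 2) = 0 &
      s * ((t1 ^+ 2 + 2 * a * t1 - d) / 2) * t1 + (1 - s) * ((t2 ^+ 2 + 2 * a * t2 - d) / 2) * t2 = W].
Proof.
move=> h -> -> ->; have h' : t1 - t2 != 0 by rewrite subr_eq0.
by split; field.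
Qed.
End H.



Ltac crunch := rewrite ?dotE ?trE; rewrite ?(tensE, mxE, big_ord1, e00, e11, e01, e10, mulr1n, mulr0n) /=.

Theorem lemma2p6 (R : rcfType) (p : R) (z : Zt R) :
  inZ z ->
  zm z != (ze z + p) *: zv z ->
  0 < 2 * ze z - vnorm (zv z) ^+ 2 ->
  Mz p z = 0 ->
  K_lam1 p z.
Proof.
case: z => v m sg e /= _ Hw Hd0 HM.
pose w := m - (e + p) *: v.
have wne0 : w != 0 by rewrite subr_eq0.
pose W := vnorm w.
pose n := W^-1 *: w.
pose d := 2 * e - vnorm v ^+ 2.
have HM' : tens v v - sg - e%:M + d *: tens n n = 0 := HM.
clear HM.
have Wpos : 0 < W by rewrite /W /vnorm sqrtr_gt0 dot_gt0.
have Wne0 : W != 0 by rewrite gt_eqF.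
have HW2 : W ^+ 2 = dot w w by rewrite /W vnorm2.
have Hn0 : n i0 ord0 = W^-1 * (m i0 ord0 - (e + p) * v i0 ord0) by rewrite /n /w !mxE.
have Hn1 : n i1 ord0 = W^-1 * (m i1 ord0 - (e + p) * v i1 ord0) by rewrite /n /w !mxE.
have Hnn : n i0 ord0 * n i0 ord0 + n i1 ord0 * n i1 ord0 = 1.
  rewrite Hn0 Hn1; move: HW2; rewrite dotE /w !mxE => HW2.
  apply: (subeqK (- W^-2) HW2); field; exact: Wne0.
have Hm0 : m i0 ord0 = W * n i0 ord0 + (e + p) * v i0 ord0 by rewrite Hn0; field.
have Hm1 : m i1 ord0 = W * n i1 ord0 + (e + p) * v i1 ord0 by rewrite Hn1; field.
have nne0 : n != 0.
  apply/negP => /eqP H; move: Hnn; rewrite H !mxE mulr0 addr0 => /eqP.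
  by rewrite eq_sym oner_eq0.
have Hvn : vnorm v ^+ 2 = v i0 ord0 * v i0 ord0 + v i1 ord0 * v i1 ord0 by rewrite vnorm2 dotE.
have dpos : 0 < d := Hd0.
have dne0 : d != 0 by rewrite gt_eqF.
clearbody n W w.
pose a := v i0 ord0 * n i0 ord0 + v i1 ord0 * n i1 ord0.
pose S := 2 * W / d - 2 * a.
pose D := Num.sqrt (S ^+ 2 + 4 * d).
have HSD : 0 < S ^+ 2 + 4 * d by nra.
have HD2 : D ^+ 2 = S ^+ 2 + 4 * d by rewrite /D sqr_sqrtr // ltW.
have Dpos : 0 < D by rewrite /D sqrtr_gt0.
clearbody D.
pose t1 := (S + D) / 2.
pose t2 := (S - D) / 2.
have Ht12 : t1 - t2 = D by rewrite /t1 /t2; field.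
have Ht : t1 != t2 by rewrite -subr_eq0 Ht12 gt_eqF.
have Hd : d = - (t1 * t2).
  have h : t1 * t2 = (S ^+ 2 - D ^+ 2) / 4 by rewrite /t1 /t2; field.
  by rewrite h HD2; field.
have HW : W = d * (t1 + t2 + 2 * a) / 2.
  have -> : t1 + t2 = S by rewrite /t1 /t2; field.
  by rewrite /S; field.
clearbody t1 t2.
pose s := - t2 / (t1 - t2).
have [K1 K2 K3 K4] := @keys _ t1 t2 a d W s Ht Hd HW (erefl s).
have t1pos : 0 < t1 by nra.
have t2neg : t2 < 0 by nra.
have s01 : 0 <= s <= 1.
  apply/andP; split; rewrite /s Ht12.
    by rewrite divr_ge0 // ?ltW // oppr_gt0.
  by rewrite ler_pdivrMr // mul1r; lra.
clearbody s.
pose f1 := (t1 ^+ 2 + 2 * a * t1 - d) / 2.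
pose f2 := (t2 ^+ 2 + 2 * a * t2 - d) / 2.
have K5 : forall t, dot (v + t *: n) (v + t *: n) = 2 * (e + (t ^+ 2 + 2 * a * t - d) / 2).
  move=> t; crunch; rewrite /a /d Hvn; apply: (subeqK (t ^+ 2) Hnn); by field.
rewrite /K_lam1; right.
exists (mkZ (v + t1 *: n) ((e + f1 + p) *: (v + t1 *: n)) (tens (v + t1 *: n) (v + t1 *: n) - (e + f1)%:M) (e + f1)).
exists (mkZ (v + t2 *: n) ((e + f2 + p) *: (v + t2 *: n)) (tens (v + t2 *: n) (v + t2 *: n) - (e + f2)%:M) (e + f2)).
exists s.
split; first exact: Kset_mk (K5 t1).
split; first exact: Kset_mk (K5 t2).
split; first exact: s01.
split; first exact: wave_mk (K5 t1) (K5 t2).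
rewrite /zadd /zscale /=.
have E0 : (0 : R) = 0 by [].
congr mkZ.
- apply/cV2P; crunch.
  + apply: (lin4 (- n i0 ord0) 0 0 0 K1 E0 E0 E0); ring.
  + apply: (lin4 (- n i1 ord0) 0 0 0 K1 E0 E0 E0); ring.
- apply/cV2P; crunch.
  + rewrite Hm0; apply: (lin4 (-(e + p) * n i0 ord0) (- v i0 ord0) (- n i0 ord0) 0 K1 K3 K4 E0).
    rewrite /f1 /f2; ring.
  + rewrite Hm1; apply: (lin4 (-(e + p) * n i1 ord0) (- v i1 ord0) (- n i1 ord0) 0 K1 K3 K4 E0).
    rewrite /f1 /f2; ring.
- have H00 := congr1 (fun A : 'M[R]_2 => A i0 i0) HM'.
  have H01 := congr1 (fun A : 'M[R]_2 => A i0 i1) HM'.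
  have H10 := congr1 (fun A : 'M[R]_2 => A i1 i0) HM'.
  have H11 := congr1 (fun A : 'M[R]_2 => A i1 i1) HM'.
  move: H00 H01 H10 H11; crunch => H00 H01 H10 H11.
  apply/M2P; crunch.
  + apply: (lin4 (-1) (- (v i0 ord0 * n i0 ord0 + n i0 ord0 * v i0 ord0)) (- n i0 ord0 * n i0 ord0) 1 H00 K1 K2 K3).
    rewrite /f1 /f2; ring.
  + apply: (lin4 (-1) (- (v i0 ord0 * n i1 ord0 + n i0 ord0 * v i1 ord0)) (- n i0 ord0 * n i1 ord0) 0 H01 K1 K2 K3).
    rewrite /f1 /f2; ring.
  + apply: (lin4 (-1) (- (v i1 ord0 * n i0 ord0 + n i1 ord0 * v i0 ord0)) (- n i1 ord0 * n i0 ord0) 0 H10 K1 K2 K3).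
    rewrite /f1 /f2; ring.
  + apply: (lin4 (-1) (- (v i1 ord0 * n i1 ord0 + n i1 ord0 * v i1 ord0)) (- n i1 ord0 * n i1 ord0) 1 H11 K1 K2 K3).
    rewrite /f1 /f2; ring.
- apply: (lin4 (-1) 0 0 0 K3 E0 E0 E0); rewrite /f1 /f2; ring.
Qed.
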